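(* Let $M\subset\mathbb{R}^m$ be a polyhedral complex and $f:|M|\to\mathbb{R}^n$ a piecewise-linear map which is affine on each cell of $M$. Let $N$ be a polyhedral complex embedded in $\mathbb{R}^n$. Suppose $f$ is transverse on cells of $M$ to the interior of every cell of $N$. If $C\le C'$ is a face relation in $M$, $D\le D'$ is a face relation in $N$, and $f(C^\circ)\cap D$ is nonempty, then $f(C'^\circ)\cap D'^\circ$ is nonempty.
   Context: Polyhedra are intersections of finitely many closed half-spaces (possibly unbounded); $P^\circ$ denotes the interior of $P$ relative to its affine span (a point is its own interior). $C\le C'$ means $C$ is a face of $C'$ or equal to it. A polyhedral complex is a finite set of polyhedra closed under taking faces such that any two members intersect in a common face; $|M|$ is the union of its cells. A map $f$ affine on each cell of $M$ is transverse on cells of $M$ to a smooth submanifold $Z$ (without boundary) if for every cell $C$ of $M$, the restriction $f|_{C^\circ}$ is transverse to $Z$, i.e. for every $x\in C^\circ$ with $f(x)\in Z$, $df(T_xC^\circ)+T_{f(x)}Z=\mathbb{R}^n$. *)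

(* Defs.v *)
From mathcomp Require Import all_boot all_order all_algebra.
From mathcomp Require Import boolp classical_sets cardinality reals.
Set Implicit Arguments. Unset Strict Implicit. Unset Printing Implicit Defensive.
Import Order.TTheory GRing.Theory Num.Theory.
Local Open Scope ring_scope.
Local Open Scope classical_set_scope.

Section Polyhedra.
Variable R : realType.

Definition dotv k (a x : 'rV[R]_k) : R := \sum_(i < k) a 0 i * x 0 i.

Definition halfspace k (a : 'rV[R]_k) (b : R) : set 'rV[R]_k :=
  [set x | dotv a x <= b].

Definition polyhedron k (P : set 'rV[R]_k) : Prop :=
  exists s : seq ('rV[R]_k * R),
    P = [set x | forall h, h \in s -> dotv h.1 x <= h.2].

(* F is a face of P or equal to P (F <= P): F is the intersection of P with
   a supporting hyperplane {a.x = b} where a.x <= b on P.  a = 0, b = 0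
   gives P itself; a = 0, b = 1 gives the empty face. *)
Definition face k (F P : set 'rV[R]_k) : Prop :=
  exists (a : 'rV[R]_k) (b : R),
    (forall x, P x -> dotv a x <= b) /\ F = P `&` [set x | dotv a x = b].

Definition dir k (P : set 'rV[R]_k) : set 'rV[R]_k :=
  [set v | exists s : seq (R * 'rV[R]_k * 'rV[R]_k),
     (forall t, t \in s -> P t.1.2 /\ P t.2) /\
     v = \sum_(t <- s) t.1.1 *: (t.1.2 - t.2)].

Definition aff k (P : set 'rV[R]_k) : set 'rV[R]_k :=
  [set y | exists x v, P x /\ dir P v /\ y = x + v].

Definition sqdist k (x y : 'rV[R]_k) : R := \sum_(i < k) (x 0 i - y 0 i) ^+ 2.

Definition relint k (P : set 'rV[R]_k) : set 'rV[R]_k :=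
  [set x | P x /\ exists e : R, 0 < e /\
     forall y, aff P y -> sqdist y x < e -> P y].

Definition polyhedral_complex k (M : set (set 'rV[R]_k)) : Prop :=
  finite_set M /\
  (forall C, M C -> polyhedron C) /\
  (forall C F, M C -> face F C -> F !=set0 -> M F) /\
  (forall C C', M C -> M C' -> face (C `&` C') C /\ face (C `&` C') C').

Definition support k (M : set (set 'rV[R]_k)) : set 'rV[R]_k :=
  \bigcup_(C in M) C.

Definition affine_on_cells m n (M : set (set 'rV[R]_m))
    (f : 'rV[R]_m -> 'rV[R]_n) : Prop :=
  forall C, M C -> exists (A : 'M[R]_(m, n)) (b : 'rV[R]_n),
    forall x, C x -> f x = x *m A + b.

(* f is transverse on cells of M to the interior D° of the polyhedron D:
   for every cell C of M and x in C° with f x in D°,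
   df(T_x C°) + T_{f x} D° = R^n.  Here T_x C° = dir C, T D° = dir D, and
   df on T_x C° is v |-> v *m A for any affine representation
   f = (x |-> x *m A + b) on C. *)
Definition transverse_on_cells m n (M : set (set 'rV[R]_m))
    (f : 'rV[R]_m -> 'rV[R]_n) (D : set 'rV[R]_n) : Prop :=
  forall C, M C -> forall x, relint C x -> relint D (f x) ->
    forall (A : 'M[R]_(m, n)) (b : 'rV[R]_n),
      (forall y, C y -> f y = y *m A + b) ->
      forall w : 'rV[R]_n, exists u v, dir C u /\ dir D v /\ w = u *m A + v.

End Polyhedra.

(* Main.v *)
Require Import Defs.
From mathcomp Require Import all_boot all_order all_algebra.
From mathcomp Require Import boolp classical_sets cardinality reals.
From mathcomp Require Import ring lra.
Import Order.TTheory GRing.Theory Num.Theory.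
Local Open Scope ring_scope.
Local Open Scope classical_set_scope.
Set Implicit Arguments. Unset Strict Implicit. Unset Printing Implicit Defensive.

Section H.
Variable R : realType.
Implicit Types k : nat.

Lemma dotvDr k (a x y : 'rV[R]_k) : dotv a (x + y) = dotv a x + dotv a y.
Proof. by rewrite /dotv -big_split; apply: eq_bigr => i _; rewrite mxE mulrDr. Qed.
Lemma dotvZr k (a x : 'rV[R]_k) c : dotv a (c *: x) = c * dotv a x.
Proof. by rewrite /dotv mulr_sumr; apply: eq_bigr => i _; rewrite mxE; ring. Qed.
Lemma dotvNr k (a x : 'rV[R]_k) : dotv a (- x) = - dotv a x.
Proof. by rewrite -scaleN1r dotvZr mulN1r. Qed.
Lemma dotvBr k (a x y : 'rV[R]_k) : dotv a (x - y) = dotv a x - dotv a y.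
Proof. by rewrite dotvDr dotvNr. Qed.
Lemma dotvDl k (a b x : 'rV[R]_k) : dotv (a + b) x = dotv a x + dotv b x.
Proof. by rewrite /dotv -big_split; apply: eq_bigr => i _; rewrite mxE mulrDl. Qed.
Lemma dotvNl k (a x : 'rV[R]_k) : dotv (- a) x = - dotv a x.
Proof. by rewrite /dotv -sumrN; apply: eq_bigr => i _; rewrite mxE mulNr. Qed.
Lemma dotv0l k (x : 'rV[R]_k) : dotv 0 x = 0.
Proof. by rewrite /dotv big1 // => i _; rewrite mxE mul0r. Qed.
Lemma dotv_suml k T (s : seq T) (F : T -> 'rV[R]_k) x :
  dotv (\sum_(t <- s) F t) x = \sum_(t <- s) dotv (F t) x.
Proof.
elim: s => [|t s IH]; first by rewrite !big_nil dotv0l.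
by rewrite !big_cons dotvDl IH.
Qed.
Lemma dotv_sumr k T (s : seq T) (F : T -> 'rV[R]_k) a :
  dotv a (\sum_(t <- s) F t) = \sum_(t <- s) dotv a (F t).
Proof.
elim: s => [|t s IH].
  by rewrite !big_nil /dotv big1 // => i _; rewrite mxE mulr0.
by rewrite !big_cons dotvDr IH.
Qed.

Lemma dirD k (P : set 'rV[R]_k) u v : dir P u -> dir P v -> dir P (u + v).
Proof.
move=> [s1 [H1 ->]] [s2 [H2 ->]]; exists (s1 ++ s2); split; last by rewrite big_cat.
by move=> t; rewrite mem_cat => /orP[/H1|/H2].
Qed.
Lemma dirZ k (P : set 'rV[R]_k) c v : dir P v -> dir P (c *: v).
Proof.
move=> [s [Hs ->]]; exists [seq (c * t.1.1, t.1.2, t.2) | t <- s]; split.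
  by move=> t /mapP[t' /Hs [? ?] ->].
by rewrite big_map scaler_sumr; apply: eq_bigr => t _; rewrite scalerA.
Qed.
Lemma dir_diff k (P : set 'rV[R]_k) y z : P y -> P z -> dir P (y - z).
Proof.
move=> Py Pz; exists [:: (1, y, z)]; split; first by move=> t; rewrite inE => /eqP ->.
by rewrite big_seq1 scale1r.
Qed.
Lemma dir_tight k (P : set 'rV[R]_k) a b v :
  (forall y, P y -> dotv a y = b) -> dir P v -> dotv a v = 0.
Proof.
move=> Ht [s [Hs ->]]; rewrite dotv_sumr big_seq big1 // => t /Hs [H1 H2].
by rewrite dotvZr dotvBr !Ht // subrr mulr0.
Qed.
Lemma aff_tight k (P : set 'rV[R]_k) a b y :
  (forall y, P y -> dotv a y = b) -> aff P y -> dotv a y = b.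
Proof.
move=> Ht [x [v [Px [Dv ->]]]]; by rewrite dotvDr (dir_tight Ht Dv) addr0 Ht.
Qed.

Lemma sqdist_ge0 k (x y : 'rV[R]_k) : 0 <= sqdist x y.
Proof. by apply: sumr_ge0 => i _; rewrite sqr_ge0. Qed.
Lemma sqdist_term k (x y : 'rV[R]_k) i : (x 0 i - y 0 i) ^+ 2 <= sqdist x y.
Proof.
rewrite /sqdist (bigD1 i) //= lerDl; apply: sumr_ge0 => j _; exact: sqr_ge0.
Qed.
Lemma sqdist_lin k (a d : 'rV[R]_k) c : sqdist (a + c *: d) a = c ^+ 2 * sqdist d 0.
Proof.
rewrite /sqdist mulr_sumr; apply: eq_bigr => i _; rewrite !mxE; ring.
Qed.
Lemma sqdistE k (y r : 'rV[R]_k) : sqdist y r = sqdist (y - r) 0.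
Proof. by apply: eq_bigr => i _; rewrite !mxE subr0. Qed.

Lemma polyhedron_convex k (P : set 'rV[R]_k) p q t :
  polyhedron P -> P p -> P q -> 0 <= t <= 1 -> P ((1 - t) *: p + t *: q).
Proof.
move=> [s Ps]; rewrite Ps /= => Hp Hq /andP[t0 t1] h hs.
rewrite dotvDr !dotvZr; have := Hp h hs; have := Hq h hs; nra.
Qed.

Lemma abs_lt_sq (x d : R) : 0 < d -> x ^+ 2 < d ^+ 2 -> `|x| < d.
Proof. move=> d0 h; rewrite ltr_norml; apply/andP; split; nra. Qed.

Lemma dotv_bound k (a d : 'rV[R]_k) (del : R) :
  (forall i, `|d 0 i| < del) -> dotv a d <= (\sum_i `|a 0 i|) * del.
Proof.
move=> H; rewrite /dotv mulr_suml; apply: ler_sum => i _.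
apply: le_trans (ler_norm _) _; rewrite normrM; apply: ler_wpM2l => //.
exact: ltW.
Qed.

Lemma exists_delta k (p : 'rV[R]_k) (s : seq ('rV[R]_k * R)) :
  exists del : R, 0 < del /\ forall h, h \in s -> dotv h.1 p < h.2 ->
    (\sum_i `|h.1 0 i|) * del < h.2 - dotv h.1 p.
Proof.
elim: s => [|h s [d0 [d0p IH]]]; first by exists 1; split => // h.
have K0 : 0 <= \sum_i `|h.1 0 i| by apply: sumr_ge0.
case: (boolP (dotv h.1 p < h.2)) => hlt; last first.
  exists d0; split => // h'; rewrite inE => /orP[/eqP ->|/IH //].
  by rewrite (negbTE hlt).
set K := \sum_i `|h.1 0 i|.
set sl := h.2 - dotv h.1 p.
have slp : 0 < sl by rewrite subr_gt0.
exists (Num.min d0 (sl / (K + 1))); split.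
  by rewrite lt_min d0p /= divr_gt0 // ltr_wpDl.
move=> h'; rewrite inE => /orP[/eqP ->|hs] hl.
  apply: le_lt_trans (_ : K * (sl / (K + 1)) < sl).
    by apply: ler_wpM2l => //; rewrite ge_min lexx orbT.
  rewrite mulrA ltr_pdivrMr ?ltr_wpDl //; nra.
apply: le_lt_trans (IH h' hs hl).
by apply: ler_wpM2l; [apply: sumr_ge0 | rewrite ge_min lexx].
Qed.

Lemma relint_crit k (P : set 'rV[R]_k) (s : seq ('rV[R]_k * R)) p :
  P = [set x | forall h, h \in s -> dotv h.1 x <= h.2] -> P p ->
  (forall h, h \in s -> dotv h.1 p < h.2 \/ (forall y, P y -> dotv h.1 y = h.2)) ->
  relint P p.
Proof.
move=> PE Pp Hs; split => //.
have [del [delp Hd]] := exists_delta p s.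
exists (del ^+ 2); split; first by rewrite exprn_gt0.
move=> y Ay Hy; rewrite PE => h hs.
case: (Hs h hs) => [hl|ht]; last by rewrite (aff_tight ht Ay).
have -> : y = p + (y - p) by rewrite addrC subrK.
rewrite dotvDr; have := Hd h hs hl.
have : dotv h.1 (y - p) <= (\sum_i `|h.1 0 i|) * del.
  apply: dotv_bound => i; apply: abs_lt_sq => //.
  rewrite !mxE; exact: le_lt_trans (sqdist_term y p i) Hy.
lra.
Qed.

Lemma relint_exists k (P : set 'rV[R]_k) : polyhedron P -> P !=set0 ->
  exists q, relint P q.
Proof.
move=> PP [p0 Pp0]; have [s PE] := PP.
suff [p [Pp Hp]] : exists p, P p /\ forall h, h \in s ->
    dotv h.1 p < h.2 \/ (forall y, P y -> dotv h.1 y = h.2).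
  by exists p; apply: (relint_crit PE).
have Hv : forall h, h \in s -> forall y, P y -> dotv h.1 y <= h.2.
  by move=> h hs y; rewrite PE => /(_ h hs).
elim: s Hv {PE} => [|h s IH] Hv; first by exists p0; split => // h.
have [p [Pp Hp]] : exists p, P p /\ forall h, h \in s ->
    dotv h.1 p < h.2 \/ (forall y, P y -> dotv h.1 y = h.2).
  by apply: IH => h' hs; apply: Hv; rewrite inE hs orbT.
have Hh := Hv h (mem_head _ _).
case: (pselect (forall y, P y -> dotv h.1 y = h.2)) => Ht.
  by exists p; split => // h'; rewrite inE => /orP[/eqP ->|/Hp]; [right|].
have [q [Pq Hq]] : exists q, P q /\ dotv h.1 q < h.2.
  apply: contra_notP Ht => Hn y Py; apply/eqP; rewrite eq_le Hh //=.
  by rewrite leNgt; apply/negP => hl; apply: Hn; exists y.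
have h2 : ((0:R) <= 2^-1) && ((2:R)^-1 <= 1) by apply/andP; split; lra.
exists ((1 - 2^-1) *: p + 2^-1 *: q); split; first exact: polyhedron_convex.
move=> h'; rewrite inE => /orP[/eqP ->|hs].
  left; rewrite dotvDr !dotvZr; have := Hh p Pp; lra.
case: (Hp h' hs) => [hl|]; last by right.
have Hq' : dotv h'.1 q <= h'.2 by apply: Hv => //; rewrite inE hs orbT.
left; rewrite dotvDr !dotvZr; lra.
Qed.

Lemma relint_step k (P : set 'rV[R]_k) x u : relint P x -> dir P u ->
  exists eps : R, 0 < eps /\ forall s, 0 < s -> s <= eps -> P (x + s *: u).
Proof.
move=> [Px [e [e0 He]]] Du.
set Q := sqdist u 0.
have Q0 : 0 <= Q by apply: sqdist_ge0.
exists (Num.min 1 (e / (Q + 1))); split.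
  by rewrite lt_min ltr01 /= divr_gt0 // ltr_wpDl.
move=> s s0; rewrite le_min => /andP[s1 s2].
have Q1 : 0 < Q + 1 by rewrite ltr_wpDl.
have s3 : s * (Q + 1) <= e by rewrite -ler_pdivlMr.
apply: He; first by exists x, (s *: u); split => //; split => //; apply: dirZ.
rewrite sqdist_lin -/Q; nra.
Qed.

Lemma relint_convex k (P : set 'rV[R]_k) p q t : polyhedron P -> P p ->
  relint P q -> 0 < t -> t <= 1 -> relint P ((1 - t) *: p + t *: q).
Proof.
move=> PP Pp [Pq [e [e0 He]]] t0 t1.
have Pr : P ((1 - t) *: p + t *: q) by apply: polyhedron_convex => //; apply/andP; split; lra.
split => //; exists (t ^+ 2 * e); split; first by rewrite mulr_gt0 ?exprn_gt0.
move=> y [x1 [v1 [Px1 [Dv1 ->]]]] Hy.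
set r := (1 - t) *: p + t *: q.
set y' := q + t^-1 *: (x1 + v1 - r).
have Ay' : aff P y'.
  exists q, (t^-1 *: (x1 + v1 - r)); split => //; split => //.
  apply: dirZ; rewrite addrAC; apply: dirD => //; exact: dir_diff.
have Py' : P y'.
  apply: He => //; rewrite sqdist_lin -sqdistE.
  by rewrite exprVn mulrC ltr_pdivrMr ?exprn_gt0 // mulrC.
have -> : x1 + v1 = (1 - t) *: p + t *: y'.
  rewrite /y' /r; apply/rowP => j; rewrite !mxE; field; lra.
by apply: polyhedron_convex => //; apply/andP; split; lra.
Qed.

Lemma min_face k (D : set 'rV[R]_k) p : polyhedron D -> D p ->
  exists F, face F D /\ relint F p.
Proof.
move=> [s DE] Dp.
set sI := [seq h <- s | dotv h.1 p == h.2].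
set a := \sum_(h <- sI) h.1.
set b := \sum_(h <- sI) h.2.
have Hv : forall h, h \in s -> forall y, D y -> dotv h.1 y <= h.2.
  by move=> h hs y; rewrite DE => /(_ h hs).
have aleb : forall x, D x -> dotv a x <= b.
  move=> x Dx; rewrite /a /b dotv_suml big_seq [X in _ <= X]big_seq.
  by apply: ler_sum => h; rewrite mem_filter => /andP[_ hs]; apply: Hv.
have peq : dotv a p = b.
  rewrite /a /b dotv_suml big_seq [RHS]big_seq; apply: eq_bigr => h.
  by rewrite mem_filter => /andP[/eqP].
set F := D `&` [set x | dotv a x = b].
have tight : forall h, h \in sI -> forall y, F y -> dotv h.1 y = h.2.
  move=> h hI y [Dy Fy].
  have H0 : \sum_(h <- sI | h \in sI) (h.2 - dotv h.1 y) == 0.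
    by rewrite -big_seq sumrB -dotv_suml -/a -/b Fy subrr.
  rewrite psumr_eq0 in H0; last first.
    move=> h'; rewrite mem_filter => /andP[_ hs]; rewrite subr_ge0; exact: Hv Dy.
  move/allP: H0 => /(_ h hI); rewrite hI /= => /eqP; lra.
have Dp' := Dp; rewrite DE in Dp'.
exists F; split; first by exists a, b; split.
apply: (@relint_crit _ _ (s ++ [:: (a, b); (-a, -b)])).
- rewrite /F DE; apply/seteqP; split => x /=.
    move=> [Hx Ex] h; rewrite mem_cat => /orP[/Hx //|].
    by rewrite !inE => /orP[/eqP->|/eqP->] /=; rewrite ?dotvNl Ex.
  move=> Hx; split; first by move=> h hs; apply: Hx; rewrite mem_cat hs.
  have h1 := Hx (a, b); have h2 := Hx (-a, -b).
  rewrite /= dotvNl !mem_cat !inE !eqxx !orbT in h1 h2.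
  by have := h1 isT; have := h2 isT; lra.
- by split.
move=> h; rewrite mem_cat => /orP[hs|].
  case: (boolP (dotv h.1 p < h.2)) => hl; [by left|right].
  apply: tight; rewrite mem_filter hs andbT eq_le Dp' //=.
  by rewrite leNgt.
rewrite !inE => /orP[/eqP->|/eqP->]; right => y [_ Ey] /=; rewrite ?dotvNl Ey //.
Qed.
End H.

Theorem lemma17 (R : realType) (m n : nat)
    (M : set (set 'rV[R]_m)) (N : set (set 'rV[R]_n))
    (f : 'rV[R]_m -> 'rV[R]_n) :
  polyhedral_complex M ->
  polyhedral_complex N ->
  affine_on_cells M f ->
  (forall D, N D -> transverse_on_cells M f D) ->
  forall C C' D D',
    M C -> M C' -> face C C' ->
    N D -> N D' -> face D D' ->
    (f @` relint C) `&` D !=set0 ->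
    (f @` relint C') `&` relint D' !=set0.
Proof.
move=> [_ [MP _]] [_ [NP [Nface _]]] Haff Htr C C' D D' MC MC' [aC [bC [_ CE]]]
  ND ND' [aD [bD [_ DE]]] [_ [[x xC <-] Dfx]].
have CC' : forall y, C y -> C' y by rewrite CE => y [].
have DD' : forall y, D y -> D' y by rewrite DE => y [].
have [F [FD Fr]] := min_face (NP D ND) Dfx.
have NF : N F by apply: (Nface D F ND FD); exists (f x); case: Fr.
have FsubD : forall y, F y -> D y by case: FD => a' [b' [_ ->]] y [].
have [A [b HA]] := Haff C' MC'.
have HAC : forall y, C y -> f y = y *m A + b by move=> y /CC' /HA.
have [y0 y0r] := relint_exists (MP C' MC') (ex_intro _ x (CC' x xC.1)).
have [z0 z0r] := relint_exists (NP D' ND') (ex_intro _ (f x) (DD' _ Dfx)).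
have [u [v [Du [Dv Hw]]]] := Htr F NF C MC x xC Fr A b HAC (z0 - f y0).
have [e1 [e1p He1]] := relint_step xC Du.
have [e2 [e2p He2]] := relint_step Fr (dirZ (-1) Dv).
set s := Num.min e1 e2.
have s0 : 0 < s by rewrite lt_min e1p e2p.
have P1 : C (x + s *: u) by apply: He1 => //; rewrite ge_min lexx.
have Q1 : F (f x + s *: (-1 *: v)) by apply: He2 => //; rewrite ge_min lexx orbT.
set t := s / (1 + s).
have t0 : 0 < t by rewrite divr_gt0 // ltr_wpDl.
have t1 : t <= 1 by rewrite ler_pdivrMr ?ltr_wpDl // mul1r lerDr.
have Hpt := relint_convex (MP C' MC') (CC' _ P1) y0r t0 t1.
exists (f ((1 - t) *: (x + s *: u) + t *: y0)); split; first by exists (((1 - t) *: (x + s *: u) + t *: y0)).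
have -> : f ((1 - t) *: (x + s *: u) + t *: y0) = (1 - t) *: (f x + s *: (-1 *: v)) + t *: z0.
  have Ez0 : z0 = u *m A + v + (y0 *m A + b).
    by rewrite -Hw -(HA _ y0r.1) subrK.
  rewrite Ez0 (HA _ Hpt.1) (HAC x xC.1) !mulmxDl -!scalemxAl !mulmxDl -!scalemxAl.
  apply/rowP => j; rewrite !mxE /t; field.
  by rewrite gt_eqF // ltr_wpDl.
exact: relint_convex (NP D' ND') (DD' _ (FsubD _ Q1)) z0r t0 t1.
Qed.
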